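(* Let $G$ be a connected graph with at least three vertices and let $m \geq 1$ be an integer. Then $$\omega(G)+1 \leq \chi_\rho(FSSD_m(G)) \leq \chi_\rho(G)+1,$$ where $\omega(G)$ denotes the clique number of $G$.
   Context: All graphs are finite and simple. For a positive integer $i$, an $i$-packing in a graph $G$ is a set of vertices any two distinct members of which are at distance greater than $i$ in $G$. The packing chromatic number $\chi_\rho(G)$ is the smallest integer $k$ such that $V(G)$ can be partitioned into sets $V_1,\dots,V_k$ with each $V_i$ an $i$-packing; equivalently, the least $k$ admitting a map $c:V(G)\to\{1,\dots,k\}$ such that $c(u)=c(v)=i$ with $u\neq v$ implies $d_G(u,v)>i$. For a positive integer $m$, the finite super subdivision graph $FSSD_m(G)$ is obtained from $G$ by replacing each edge $uv$ of $G$ by a copy of $K_{2,m}$, i.e. the edge $uv$ is deleted and $m$ new vertices are added, each adjacent to exactly $u$ and $v$. *)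

(* Defs.v *)
From Stdlib Require Import ClassicalEpsilon.
From mathcomp Require Import all_boot.
Set Implicit Arguments. Unset Strict Implicit. Unset Printing Implicit Defensive.

Definition simple_graph (V : finType) (e : rel V) : Prop :=
  symmetric e /\ irreflexive e.

Definition connected_graph (V : finType) (e : rel V) : Prop :=
  forall u v : V, connect e u v.

(** [within e i u v] : d_G(u,v) <= i, i.e. there is a walk of length <= i
    from u to v.  Hence d_G(u,v) > i  iff  ~ within e i u v
    (this includes d = infinity for disconnected u, v). *)
Definition within (V : finType) (e : rel V) (i : nat) (u v : V) : Prop :=
  exists p : seq V, [/\ path e u p, last u p = v & size p <= i].

Definition packing_coloring (V : finType) (e : rel V) (k : nat) (c : V -> nat)
  : Prop :=
  (forall v, 1 <= c v <= k) /\
  (forall u v, u != v -> c u = c v -> ~ within e (c u) u v).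

Definition packing_colorable (V : finType) (e : rel V) (k : nat) : Prop :=
  exists c : V -> nat, packing_coloring e k c.

Lemma packing_colorable_card (V : finType) (e : rel V) :
  packing_colorable e #|V|.
Proof.
exists (fun x => (enum_rank x).+1); split.
  by move=> v; rewrite /= ltn_ord.
move=> u v Huv [] /val_inj /enum_rank_inj Huv'.
by rewrite Huv' eqxx in Huv.
Qed.

Definition packing_colorableb (V : finType) (e : rel V) : pred nat :=
  fun k => if excluded_middle_informative (packing_colorable e k)
           then true else false.

Lemma packing_colorableb_ex (V : finType) (e : rel V) :
  exists k, packing_colorableb e k.
Proof.
exists #|V|; rewrite /packing_colorableb.
case: excluded_middle_informative => // H; exfalso; apply: H; exact: packing_colorable_card.
Qed.

Definition packing_chromatic_number (V : finType) (e : rel V) : nat :=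
  ex_minn (packing_colorableb_ex e).

Definition is_clique (V : finType) (e : rel V) (K : {set V}) : bool :=
  [forall x in K, forall y in K, (x != y) ==> e x y].

Definition clique_number (V : finType) (e : rel V) : nat :=
  \max_(K : {set V} | is_clique e K) #|K|.

Definition is_edge (V : finType) (e : rel V) (A : {set V}) : bool :=
  [exists u, exists v, e u v && (A == [set u; v])].

Definition edge_type (V : finType) (e : rel V) : finType :=
  {A : {set V} | is_edge e A}.

(** FSSD_m(G): vertices are the original vertices plus, for each edge uv
    and each j < m, a new vertex (uv, j) adjacent exactly to u and v. *)
Definition fssd_vertex (V : finType) (e : rel V) (m : nat) : finType :=
  (V + (edge_type e * 'I_m))%type.

Definition fssd_rel (V : finType) (e : rel V) (m : nat) : rel (fssd_vertex e m) :=
  fun x y =>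
    match x, y with
    | inl u, inr (A, _) => u \in val A
    | inr (A, _), inl u => u \in val A
    | _, _ => false
    end.
Arguments fssd_rel {V} e m.

(* Main.v *)
Require Import Defs.
From Stdlib Require Import ClassicalEpsilon.
From mathcomp Require Import all_boot zify.
Set Implicit Arguments. Unset Strict Implicit. Unset Printing Implicit Defensive.

Section Fssd.
Variables (V : finType) (e : rel V) (m : nat).
Hypothesis eS : symmetric e.
Hypothesis eirr : irreflexive e.
Hypothesis hm : 0 < m.

Local Notation W := (fssd_vertex e m).
Local Notation F := (fssd_rel e m).

Lemma is_edge_uv u v : e u v -> is_edge e [set u; v].
Proof. by move=> h; apply/existsP; exists u; apply/existsP; exists v; rewrite h eqxx. Qed.

Definition xv (u v : V) : W :=
  match (insub [set u; v] : option (edge_type e)) with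
  | Some A => inr (A, Ordinal hm)
  | None => inl u
  end.

Lemma xvE u v (h : e u v) :
  xv u v = inr (exist _ [set u; v] (is_edge_uv h), Ordinal hm).
Proof.
rewrite /xv; case: insubP => [A _ EA|]; last by rewrite is_edge_uv.
by congr inr; congr pair; apply: val_inj; rewrite /= EA.
Qed.

Lemma adj_lx a u v : e u v -> a \in [set u; v] -> F (inl a) (xv u v).
Proof. by move=> h ha; rewrite (xvE h). Qed.

Lemma adj_xl a u v : e u v -> a \in [set u; v] -> F (xv u v) (inl a).
Proof. by move=> h ha; rewrite (xvE h). Qed.

Lemma xv_neq u v a b t : e u v -> e a b -> t \notin [set u; v] -> t \in [set a; b] ->
  xv u v != xv a b.
Proof.
move=> h1 h2 t1 t2; rewrite (xvE h1) (xvE h2); apply/eqP => -[E].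
by rewrite E t2 in t1.
Qed.

Lemma xv_neql u v a : e u v -> xv u v != inl a.
Proof. by move=> h; rewrite (xvE h). Qed.

Ltac wk := rewrite /= ?xvE //; split => //=; rewrite ?andbT /=.

Lemma W1 a u v : e u v -> a \in [set u; v] -> within F 1 (inl a) (xv u v).
Proof. by move=> h ha; exists [:: xv u v]; wk. Qed.

Lemma W1' a u v : e u v -> a \in [set u; v] -> within F 1 (xv u v) (inl a).
Proof. by move=> h ha; exists [:: inl a]; wk. Qed.

Lemma W2ll a b : e a b -> within F 2 (inl a) (inl b).
Proof. by move=> h; exists [:: xv a b; inl b]; wk; rewrite !inE !eqxx ?orbT. Qed.

Lemma W2xx u v a b t : e u v -> e a b -> t \in [set u; v] -> t \in [set a; b] ->
  within F 2 (xv u v) (xv a b).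
Proof. by move=> h1 h2 t1 t2; exists [:: inl t; xv a b]; wk; rewrite t1 t2. Qed.

Lemma W3 u v t z : e u v -> t \in [set u; v] -> e t z -> within F 3 (xv u v) (inl z).
Proof. by move=> h1 t1 h2; exists [:: inl t; xv t z; inl z]; wk; rewrite t1 !inE !eqxx ?orbT. Qed.

Lemma W4 u v t t' a b : e u v -> t \in [set u; v] -> e t t' -> t' \in [set a; b] -> e a b ->
  within F 4 (xv u v) (xv a b).
Proof.
by move=> h1 t1 h2 t2 h3; exists [:: inl t; xv t t'; inl t'; xv a b]; wk; rewrite t1 t2 !inE !eqxx ?orbT.
Qed.


Lemma inl_neq a b : a != b -> (inl a : W) != inl b.
Proof. by move=> ab; apply/eqP=> -[E]; rewrite E eqxx in ab. Qed.

Lemma conflict n c (p q : W) d : packing_coloring F n c -> c p = c q -> p != q ->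
  within F d p q -> d <= c p -> False.
Proof.
move=> [_ Hc] E pq [s [Hs Hl Hsz]] dc; apply: (Hc p q pq E); exists s; split => //.
exact: leq_trans Hsz dc.
Qed.

Lemma count_colors n c (s : seq W) : packing_coloring F n c -> uniq (map c s) -> size s <= n.
Proof.
move=> Pc U; rewrite -(size_map c) -(size_iota 1 n); apply: uniq_leq_size => // x /mapP [p _ ->].
case/andP: (Pc.1 p) => h1 h2; rewrite mem_iota h1 /=; lia.
Qed.

Lemma in1 (a b : V) : a \in [set a; b].
Proof. by rewrite !inE eqxx. Qed.
Lemma in2 (a b : V) : b \in [set a; b].
Proof. by rewrite !inE eqxx orbT. Qed.
Lemma neq_e a b : e a b -> a != b.
Proof. by move=> h; apply: contraTneq h => ->; rewrite eirr. Qed.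

Lemma lower3 n c u v w : packing_coloring F n c -> e u v -> e v w -> u != w -> 3 <= n.
Proof.
move=> Pc huv hvw uw; rewrite leqNgt; apply/negP => hn.
have cb p : 1 <= c p <= 2 by have := Pc.1 p; lia.
have uv := neq_e huv; have vw := neq_e hvw.
have [cv1|cv2] : c (inl v) = 1 \/ c (inl v) = 2 by have := cb (inl v); lia.
- have hx : c (xv u v) = 2.
    have : c (xv u v) != 1.
      apply/eqP=> E; apply: (conflict Pc (_ : c (inl v) = c (xv u v)) _ (W1 huv (in2 u v))).
      + by rewrite E cv1.
      + by rewrite eq_sym xv_neql.
      + by rewrite cv1.
    by have := cb (xv u v); lia.
  have hy : c (xv v w) = 2.
    have : c (xv v w) != 1.
      apply/eqP=> E; apply: (conflict Pc (_ : c (inl v) = c (xv v w)) _ (W1 hvw (in1 v w))).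
      + by rewrite E cv1.
      + by rewrite eq_sym xv_neql.
      + by rewrite cv1.
    by have := cb (xv v w); lia.
  apply: (conflict Pc (_ : c (xv u v) = c (xv v w)) _ (W2xx huv hvw (in2 u v) (in1 v w))).
  + by rewrite hx hy.
  + apply: (xv_neq (t := w)) => //; last exact: in2.
    by rewrite !inE negb_or eq_sym uw eq_sym vw.
  + by rewrite hx.
- have hx : c (xv u v) = 1.
    have : c (xv u v) != 2.
      apply/eqP=> E; apply: (conflict Pc (_ : c (xv u v) = c (inl v)) _ (W1' huv (in2 u v))).
      + by rewrite E cv2.
      + by rewrite xv_neql.
      + by rewrite E.
    by have := cb (xv u v); lia.
  have hu : c (inl u) = 2.
    have : c (inl u) != 1.
      apply/eqP=> E; apply: (conflict Pc (_ : c (inl u) = c (xv u v)) _ (W1 huv (in1 u v))).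
      + by rewrite E hx.
      + by rewrite eq_sym xv_neql.
      + by rewrite E.
    by have := cb (inl u); lia.
  apply: (conflict Pc (_ : c (inl u) = c (inl v)) (inl_neq uv) (W2ll huv)).
  + by rewrite hu cv2.
  + by rewrite hu.
Qed.


Lemma gt2 (k : nat) : 1 <= k -> k != 1 -> k != 2 -> 2 < k.
Proof. lia. Qed.

Ltac nlia := repeat match goal with H : _ |- _ => clear H end; lia.

Lemma lower_clique n c (K : {set V}) : packing_coloring F n c -> is_clique e K ->
  3 <= #|K| -> #|K| + 1 <= n.
Proof.
move=> Pc HK k3.
have eK a b : a \in K -> b \in K -> a != b -> e a b.
  move=> aK bK ab; move/forallP: HK => /(_ a); rewrite aK /= => /forallP /(_ b).
  by rewrite bK ab.
have ge1 p : 1 <= c p by case/andP: (Pc.1 p).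
have KK a b : a \in K -> b \in K -> a != b -> c (inl a) = c (inl b) -> c (inl a) = 1.
  move=> aK bK ab E; have := ge1 (inl a); case: (ltngtP (c (inl a)) 1) => // h _.
  by exfalso; apply: (conflict Pc E (inl_neq ab) (W2ll (eK a b aK bK ab))); move: h; nlia.
case: (boolP [exists a in K, c (inl a) == 1]) => [/existsP [u0 /andP [u0K /eqP cu0]] | no1].
- pose X0 := map (xv u0) (enum (K :\ u0)).
  have inK v : v \in K :\ u0 -> v \in K /\ v != u0 by rewrite !inE => /andP [].
  have eu0 v : v \in K :\ u0 -> e u0 v.
    by move=> /inK [vK vu]; apply: eK => //; rewrite eq_sym.
  have cX1 v : v \in K :\ u0 -> c (xv u0 v) != 1.
    move=> hv; apply/eqP => E.
    apply: (conflict Pc (_ : c (inl u0) = c (xv u0 v)) _ (W1 (eu0 v hv) (in1 u0 v))).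
    + by rewrite cu0 E.
    + by rewrite eq_sym (xv_neql _ (eu0 v hv)).
    + by rewrite cu0.
  suff [z [z1 zX]] : exists z : W, c z != 1 /\ forall v, v \in K :\ u0 -> c z != c (xv u0 v).
    have -> : #|K| + 1 = size (inl u0 :: z :: X0).
      by rewrite /= size_map -cardE (cardsD1 u0 K) u0K; nlia.
    apply: (count_colors Pc); rewrite /=; apply/and3P; split.
    + rewrite inE negb_or cu0 eq_sym z1 /=; apply/mapP => -[p /mapP [v hv ->] E].
      rewrite mem_enum in hv; by move: (cX1 v hv); rewrite -E eqxx.
    + apply/mapP => -[p /mapP [v hv ->] E]; rewrite mem_enum in hv.
      by move: (zX v hv); rewrite E eqxx.
    + rewrite -map_comp map_inj_in_uniq ?enum_uniq // => v v' hv hv' /= E.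
      rewrite !mem_enum in hv hv'; apply/eqP; apply: contraT => vv'; exfalso.
      apply: (conflict Pc E _ (W2xx (eu0 v hv) (eu0 v' hv') (in1 u0 v) (in1 u0 v'))).
      * apply: (xv_neq (t := v') (eu0 v hv) (eu0 v' hv')); last exact: in2.
        by have [_ h] := inK v' hv'; rewrite !inE negb_or h eq_sym vv'.
      * by have := cX1 v hv; have := ge1 (xv u0 v); nlia.
  case: (boolP [exists w in K, 3 <= c (inl w)]) => [/existsP [w /andP [wK w3]] | no3].
    exists (inl w); split; first by apply/eqP => h; rewrite h in w3.
    have wu0 : w != u0 by apply/eqP => h; rewrite h cu0 in w3.
    move=> v hv; apply/eqP => E; case: (eqVneq v w) => [vw | vw].
    + subst v; exact: (conflict Pc (esym E) (xv_neql _ (eu0 w hv)) (W1' (eu0 w hv) (in2 u0 w)) (ge1 _)).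
    + apply: (conflict Pc (esym E) (xv_neql _ (eu0 v hv)) (W3 (eu0 v hv) (in1 u0 v) (eK u0 w u0K wK _))).
      * by rewrite eq_sym.
      * by rewrite -E.
  have c2 t : t \in K -> c (inl t) <= 2.
    move=> tK; move: no3; apply: contraNT; rewrite -ltnNge => h.
    by apply/existsP; exists t; rewrite tK.
  have noX1 a b : a \in K -> b \in K -> a != b -> c (xv a b) != 1.
    move=> aK bK ab; apply/eqP => E; have eab := eK a b aK bK ab.
    have ha : c (inl a) != 1.
      apply/eqP=> Ea; apply: (conflict Pc (_ : c (inl a) = c (xv a b)) _ (W1 eab (in1 a b))).
      + by rewrite Ea E.
      + by rewrite eq_sym xv_neql.
      + by rewrite Ea.
    have hb : c (inl b) != 1.
      apply/eqP=> Eb; apply: (conflict Pc (_ : c (inl b) = c (xv a b)) _ (W1 eab (in2 a b))).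
      + by rewrite Eb E.
      + by rewrite eq_sym xv_neql.
      + by rewrite Eb.
    have := KK a b aK bK ab; have := c2 a aK; have := c2 b bK.
    have := ge1 (inl a); have := ge1 (inl b); move: ha hb; nlia.
  case: (ltngtP #|K| 3) => [lt | gt | eq3]; first by move: k3; rewrite leqNgt lt.
  + have : 2 < #|K :\ u0| by rewrite (cardsD1 u0 K) u0K in gt; move: gt; nlia.
    case/card_gt2P => [a [b [d [[ha hb hd] [ab bd da]]]]].
    have good x y : x \in K :\ u0 -> y \in K :\ u0 -> x != y -> 4 <= c (xv x y) ->
        exists z : W, c z != 1 /\ forall v, v \in K :\ u0 -> c z != c (xv u0 v).
      move=> hx hy xy c4; have [xK xu] := inK x hx; have [yK yu] := inK y hy.
      have exy := eK x y xK yK xy.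
      exists (xv x y); split; first by apply/eqP => h; rewrite h in c4.
      have nu0 : u0 \notin [set x; y] by rewrite !inE negb_or ![u0 == _]eq_sym xu yu.
      move=> v hv; apply/eqP => E; case: (boolP (v \in [set x; y])) => vin.
      * apply: (conflict Pc E (xv_neq (t := u0) exy (eu0 v hv) nu0 (in1 u0 v))
                  (W2xx exy (eu0 v hv) vin (in2 u0 v))).
        exact: leq_trans c4.
      * apply: (conflict Pc E (xv_neq (t := u0) exy (eu0 v hv) nu0 (in1 u0 v))
                  (W4 exy (in1 x y) (eK x u0 xK u0K xu) (in1 u0 v) (eu0 v hv)) c4).
    have share x y z : x \in K :\ u0 -> y \in K :\ u0 -> z \in K :\ u0 ->
        x != y -> y != z -> z != x -> c (xv x y) != c (xv y z).
      move=> hx hy hz xy yz zx; have [xK _] := inK x hx; have [yK _] := inK y hy.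
      have [zK _] := inK z hz.
      apply/eqP => E.
      apply: (conflict Pc E _ (W2xx (eK x y xK yK xy) (eK y z yK zK yz) (in2 x y) (in1 y z))).
      * apply: (xv_neq (t := z) (eK x y xK yK xy) (eK y z yK zK yz)); last exact: in2.
        by rewrite !inE negb_or zx eq_sym yz.
      * move: (noX1 x y xK yK xy) (ge1 (xv x y)); nlia.
    case: (leqP 4 (c (xv a b))) => h1; first exact: (good a b ha hb ab h1).
    case: (leqP 4 (c (xv b d))) => h2; first exact: (good b d hb hd bd h2).
    case: (leqP 4 (c (xv d a))) => h3; first exact: (good d a hd ha da h3).
    have s1 := share a b d ha hb hd ab bd da.
    have s2 := share b d a hb hd ha bd da ab.
    have s3 := share d a b hd ha hb da ab bd.
    have [aK _] := inK a ha; have [bK _] := inK b hb; have [dK _] := inK d hd.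
    have n1 := noX1 a b aK bK ab; have n2 := noX1 b d bK dK bd; have n3 := noX1 d a dK aK da.
    have := ge1 (xv a b); have := ge1 (xv b d); have := ge1 (xv d a).
    move: s1 s2 s3 n1 n2 n3 h1 h2 h3; nlia.
  + have : #|K :\ u0| == 2 by rewrite (cardsD1 u0 K) u0K in eq3; apply/eqP; move: eq3; nlia.
    case/cards2P => [a [b [ab KE]]].
    have ha : a \in K :\ u0 by rewrite KE in1.
    have hb : b \in K :\ u0 by rewrite KE in2.
    have [aK _] := inK a ha; have [bK _] := inK b hb.
    have exy := eK a b aK bK ab.
    have nu0 : u0 \notin [set a; b] by rewrite -KE !inE eqxx.
    exists (xv a b); split; first exact: noX1.
    move=> v hv; apply/eqP => E; have vin := hv; rewrite KE in vin.
    apply: (conflict Pc E (xv_neq (t := u0) exy (eu0 v hv) nu0 (in1 u0 v))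
                (W2xx exy (eu0 v hv) vin (in2 u0 v))).
    by have := noX1 a b aK bK ab; have := ge1 (xv a b); nlia.
- have n1 t : t \in K -> c (inl t) != 1.
    move=> tK; apply/negP => /eqP h; move/negP: no1; apply; apply/existsP; exists t.
    by rewrite tK h.
  have KK' a b : a \in K -> b \in K -> a != b -> c (inl a) != c (inl b).
    move=> aK bK ab; apply/eqP => E; have := KK a b aK bK ab E; have := n1 a aK; nlia.
  have [a [b [aK bK ab ch]]] : exists a b, [/\ a \in K, b \in K, a != b &
      forall t, t \in K -> c (inl t) = 2 -> t \in [set a; b]].
    case: (boolP [exists y in K, c (inl y) == 2]) => [/existsP [y /andP [yK /eqP cy]] | no2].
      have : 0 < #|K :\ y| by rewrite (cardsD1 y K) yK in k3; move: k3; nlia.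
      case/card_gt0P => a; rewrite !inE => /andP [ay aK].
      exists a, y; split => // t tK ct; rewrite !inE; apply/orP; right.
      apply: contraT => ty; have := KK' t y tK yK ty; by rewrite ct cy.
    have : 1 < #|K| by move: k3; nlia.
    case/card_gt1P => a [b [aK bK ab]]; exists a, b; split => // t tK ct; exfalso.
    move/negP: no2; apply; apply/existsP; exists t; by rewrite tK ct.
  have eab := eK a b aK bK ab.
  have -> : #|K| + 1 = size (xv a b :: map inl (enum K)) by rewrite /= size_map -cardE; nlia.
  apply: (count_colors Pc); rewrite /=; apply/andP; split.
  + apply/mapP => -[p /mapP [t tK ->] E]; rewrite mem_enum in tK.
    case: (boolP (t \in [set a; b])) => tin.
      exact: (conflict Pc E (xv_neql _ eab) (W1' eab tin) (ge1 _)).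
    have ct2 : c (inl t) != 2 by apply/eqP => h; move: (ch t tK h); rewrite (negbTE tin).
    have at_ : a != t by apply/eqP => h; rewrite h in1 in tin.
    apply: (conflict Pc E (xv_neql _ eab) (W3 eab (in1 a b) (eK a t aK tK at_))) => //.
    rewrite E; exact: gt2 (ge1 _) (n1 t tK) ct2.
  + rewrite -map_comp map_inj_in_uniq ?enum_uniq // => t t' ht ht' /= E.
    rewrite !mem_enum in ht ht'; apply/eqP; apply: contraT => tt'.
    by have := KK' t t' ht ht' tt'; rewrite E eqxx.
Qed.


Lemma proj k (p : seq W) u v : size p <= k -> path F (inl u) p -> last (inl u) p = inl v ->
  exists q, [/\ path e u q, last u q = v & size q <= (size p)./2].
Proof.
elim: k p u => [|k IH] [|y p] u //=.
- by move=> _ _ [->]; exists [::].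
- by move=> _ _ [->]; exists [::].
case: y => [w|[A j]] //=.
case: p => [|y' p'] //=.
case: y' => [w|[B j']] //=; last by move=> _ /andP [].
move=> hs /and3P [uA wA hp] hl.
have hs' : size p' <= k by move: hs; rewrite !ltnS; apply: ltnW.
have [q [hq lq sq]] := IH p' w hs' hp hl.
case: A uA wA {hs hl} => A /existsP [a /existsP [b /andP [eab /eqP AE]]] /= uA wA.
rewrite AE !inE in uA wA.
case: (eqVneq u w) => [E|uw].
  by subst w; exists q; split => //; apply: leq_trans sq (leqnSn _).
exists (w :: q); split => //=.
rewrite hq andbT.
have : (u == a) && (w == b) || (u == b) && (w == a).
  case/orP: uA => /eqP hu; case/orP: wA => /eqP hw; subst; rewrite ?eqxx ?orbT //;
  by rewrite eqxx in uw.
by case/orP => /andP [/eqP -> /eqP ->] //; rewrite eS.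
Qed.

Lemma upper n (cG : V -> nat) : packing_coloring e n cG -> packing_colorable F n.+1.
Proof.
move=> [Hb Hc].
exists (fun x : W => match x with inl v => (cG v).+1 | inr _ => 1 end); split.
- by case=> [v|_] //=; rewrite ltnS; case/andP: (Hb v).
case=> [a|[A j]] [b|[B j']] //=.
- move=> ab [E] [s [hs hl hsz]].
  have [q [hq lq sq]] := proj (leqnn _) hs hl.
  apply: (Hc a b _ E); first by apply: contraNneq ab => ->.
  exists q; split => //.
  have h := half_leq hsz; have h1 := Hb a; move: h sq h1; rewrite -!divn2; nlia.
- by move=> _ [E]; have := Hb a; rewrite E.
- by move=> _ [E]; have := Hb b; rewrite -E.
- move=> ne _ [s [hs hl hsz]].
  case: s hs hl hsz => [|y [|y2 s]] //=.
  + by move=> _ E; rewrite E eqxx in ne.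
  + by move=> /andP [h _] E; rewrite E in h.
Qed.

Lemma exit (P : pred V) p x : P x -> path e x p -> ~~ P (last x p) ->
  exists y z, [/\ P y, ~~ P z & e y z].
Proof.
elim: p x => [|y p IH] x /= Px; first by rewrite Px.
case/andP => exy hp hl; case: (boolP (P y)) => Py; first exact: IH Py hp hl.
by exists x, y.
Qed.

Lemma triple : connected_graph e -> 3 <= #|V| -> exists u v w, [/\ e u v, e v w & u != w].
Proof.
move=> hc /card_gt2P [x [y [z [_ [xy yz zx]]]]].
have [u [v [/eqP ux vx huv]]] : exists u v, [/\ u == x, v != x & e u v].
  case/connectP: (hc x y) => p hp hl.
  have := @exit (pred1 x) p x (eqxx x) hp; rewrite -hl /= eq_sym xy => /(_ isT).
  by case=> [u [v [hu hv huv]]]; exists u, v.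
subst u.
pose t := if v == y then z else y.
have tnin : t \notin [set x; v].
  rewrite /t !inE negb_or; case: (eqVneq v y) => [->|vy] /=.
    by rewrite zx eq_sym yz.
  by rewrite eq_sym xy eq_sym vy.
case/connectP: (hc x t) => p hp hl.
have := @exit (fun s => s \in [set x; v]) p x (in1 x v) hp; rewrite -hl => /(_ tnin).
case=> [y' [z' [hy hz hyz]]].
rewrite !inE negb_or in hy hz; case/andP: hz => hz1 hz2.
case/orP: hy => /eqP E; subst y'.
- by exists v, x, z'; split => //; [rewrite eS | rewrite eq_sym].
- by exists x, v, z'; split => //; rewrite eq_sym.
Qed.

End Fssd.


Theorem proposition3 (V : finType) (e : rel V) (m : nat) :
  simple_graph e -> connected_graph e -> 3 <= #|V| -> 1 <= m ->
  clique_number e + 1 <= packing_chromatic_number (fssd_rel e m) <=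
  packing_chromatic_number e + 1.
Proof.
move=> [eS eI] hc h3 hm.
have Pb (W' : finType) (r : rel W') k : packing_colorable r k -> packing_colorableb r k.
  by move=> H; rewrite /packing_colorableb; case: excluded_middle_informative.
have bP (W' : finType) (r : rel W') k : packing_colorableb r k -> packing_colorable r k.
  by rewrite /packing_colorableb; case: excluded_middle_informative.
apply/andP; split.
- rewrite /packing_chromatic_number.
  case: (ex_minnP (packing_colorableb_ex (fssd_rel e m))) => n /bP [c Pc] _.
  have [K HK ->] : exists2 K, is_clique e K & clique_number e = #|K|.
    have := @eq_bigmax_cond _ (is_clique e) (fun K => #|K|).
    case => [|K HK E]; last by exists K => //; exact: E.
    apply/card_gt0P; exists set0; rewrite unfold_in; apply/forallP => x.
    by rewrite inE.
  case: (leqP 3 #|K|) => k3; first exact: (lower_clique hm Pc HK k3).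
  have [u [v [w [huv hvw uw]]]] := triple eS hc h3.
  have := lower3 eI hm Pc huv hvw uw; move: k3; clear; lia.
- rewrite /packing_chromatic_number.
  case: (ex_minnP (packing_colorableb_ex e)) => n /bP [cG Pe] _.
  case: (ex_minnP (packing_colorableb_ex (fssd_rel e m))) => n' _ Hmin.
  apply: Hmin; apply: Pb; rewrite addn1; exact: (@upper V e m eS n cG Pe).
Qed.
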